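(* Let $E,m>0$, $\ell_z\in\mathbb{R}$, $\ell\ge 0$, and let $(x,p)\in\Gamma$ be a point with $F_0(x,p)=\tfrac12m^2$, $F_1(x,p)=E$, $F_2(x,p)=\ell_z$, $F_3(x,p)=\ell^2$, where $x$ has radial coordinate $r$. Then the differentials $dF_0,dF_1,dF_2,dF_3$ at $(x,p)$ are linearly independent, unless one of the following two cases occurs: (a) $|\ell_z|=\ell$ (motion confined to the equatorial plane); (b) $V_{m,\ell}(r)=E^2$ and $\frac{d}{dr}V_{m,\ell}(r)=0$ (circular trajectories).
   Context: Fix $M_H>0$. Let $M$ be the region of the extended Schwarzschild spacetime covered by horizon-penetrating coordinates $(t,r,\vartheta,\varphi)$, $t\in\mathbb{R}$, $r>0$, in which the inverse metric is $g^{-1}=-(1+\tfrac{2M_H}{r})\partial_t\otimes\partial_t+\tfrac{4M_H}{r}\partial_t\otimes_s\partial_r+(1-\tfrac{2M_H}{r})\partial_r\otimes\partial_r+\tfrac{1}{r^2}(\partial_\vartheta\otimes\partial_\vartheta+\tfrac{1}{\sin^2\vartheta}\partial_\varphi\otimes\partial_\varphi)$. On $T^*M$ use adapted coordinates $(x^\mu,p_\mu)$ with $p=p_\mu dx^\mu$. The free-particle Hamiltonian is $H=\tfrac12 g^{\mu\nu}p_\mu p_\nu$; $\Gamma$ is the set of $(x,p)\in T^*M$ with $p$ timelike and future-directed. Define $F_0=-H$, $F_1=-p_t$, $F_2=p_\varphi$, $F_3=p_\vartheta^2+p_\varphi^2/\sin^2\vartheta$, and $V_{m,\ell}(r)=(1-2M_H/r)(m^2+\ell^2/r^2)$.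 *)

(* Defs.v *)
From Stdlib Require Import Reals Lra.
From Coquelicot Require Import Coquelicot.
Open Scope R_scope.

(* A point of T*M in adapted coordinates, as a function nat -> R with
   index 0 = t, 1 = r, 2 = theta, 3 = phi, 4 = p_t, 5 = p_r,
   6 = p_theta, 7 = p_phi  (indices >= 8 are irrelevant). *)
Definition PS := nat -> R.

Definition c_t (z : PS) := z 0%nat.
Definition c_r (z : PS) := z 1%nat.
Definition c_th (z : PS) := z 2%nat.
Definition c_ph (z : PS) := z 3%nat.
Definition c_pt (z : PS) := z 4%nat.
Definition c_pr (z : PS) := z 5%nat.
Definition c_pth (z : PS) := z 6%nat.
Definition c_pph (z : PS) := z 7%nat.

(* Inverse metric components (a (x)_s b = (a(x)b + b(x)a)/2, so g^{tr} = 2M_H/r). *)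
Definition g_tt (MH r : R) := - (1 + 2 * MH / r).
Definition g_tr (MH r : R) := 2 * MH / r.
Definition g_rr (MH r : R) := 1 - 2 * MH / r.

Definition gpp (MH : R) (z : PS) : R :=
  let r := c_r z in
  g_tt MH r * c_pt z ^ 2 + 2 * g_tr MH r * c_pt z * c_pr z
  + g_rr MH r * c_pr z ^ 2
  + (c_pth z ^ 2 + c_pph z ^ 2 / (sin (c_th z)) ^ 2) / r ^ 2.

Definition Ham (MH : R) (z : PS) : R := / 2 * gpp MH z.

Definition in_chart (z : PS) : Prop := 0 < c_r z /\ 0 < c_th z < PI.

Definition p_up_t (MH : R) (z : PS) : R :=
  g_tt MH (c_r z) * c_pt z + g_tr MH (c_r z) * c_pr z.

(* Gamma: p timelike and future-directed (time orientation given by the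
   time function t, whose differential dt is timelike: p future-directed iff
   p^t > 0). *)
Definition in_Gamma (MH : R) (z : PS) : Prop :=
  in_chart z /\ gpp MH z < 0 /\ 0 < p_up_t MH z.

Definition F0 (MH : R) (z : PS) : R := - Ham MH z.
Definition F1 (z : PS) : R := - c_pt z.
Definition F2 (z : PS) : R := c_pph z.
Definition F3 (z : PS) : R := c_pth z ^ 2 + c_pph z ^ 2 / (sin (c_th z)) ^ 2.

Definition Veff (MH m l r : R) : R := (1 - 2 * MH / r) * (m ^ 2 + l ^ 2 / r ^ 2).

Definition upd (z : PS) (k : nat) (s : R) : PS :=
  fun j => if Nat.eqb j k then s else z j.

Definition dF (F : PS -> R) (z : PS) : nat -> R :=
  fun k => Derive (fun s => F (upd z k s)) (z k).

Definition lin_indep4 (v0 v1 v2 v3 : nat -> R) : Prop :=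
  forall c0 c1 c2 c3 : R,
    (forall k : nat, (k < 8)%nat ->
       c0 * v0 k + c1 * v1 k + c2 * v2 k + c3 * v3 k = 0) ->
    c0 = 0 /\ c1 = 0 /\ c2 = 0 /\ c3 = 0.

(* Main.v *)
Require Import Defs.
From Stdlib Require Import Reals Lra Lia.
From Coquelicot Require Import Coquelicot.
Open Scope R_scope.

Ltac dcomp := intros;
  unfold dF; apply is_derive_unique;
  unfold F0, F1, F2, F3, Ham, gpp, c_r, c_th, c_pt, c_pr, c_pth, c_pph, g_tt, g_tr, g_rr;
  cbv [upd Nat.eqb]; auto_derive;
  [ repeat split; repeat apply Rmult_integral_contrapositive_currified; auto; lra
  | try field; repeat split; auto; lra ].

Section S.
Variables (MH : R) (z : PS).
Hypothesis Hr : 0 < z 1%nat.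
Hypothesis Hs : sin (z 2%nat) <> 0.
Local Notation r := (z 1%nat). Local Notation th := (z 2%nat). Local Notation pt := (z 4%nat).
Local Notation pr := (z 5%nat). Local Notation pth := (z 6%nat). Local Notation pph := (z 7%nat).

Lemma d0_1 : dF (F0 MH) z 1 = - / 2 * ((2*MH/r^2)*pt^2 - (4*MH/r^2)*pt*pr + (2*MH/r^2)*pr^2
   - 2*(pth^2 + pph^2/(sin th)^2)/r^3).
Proof. dcomp. Qed.
Lemma d0_2 : dF (F0 MH) z 2 = pph^2 * cos th / ((sin th)^3 * r^2).
Proof. dcomp. Qed.
Lemma d0_4 : dF (F0 MH) z 4 = - (g_tt MH r * pt + g_tr MH r * pr).
Proof. unfold g_tt, g_tr. dcomp. Qed.
Lemma d0_5 : dF (F0 MH) z 5 = - (g_tr MH r * pt + g_rr MH r * pr).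
Proof. unfold g_rr, g_tr. dcomp. Qed.
Lemma d0_6 : dF (F0 MH) z 6 = - pth / r^2.
Proof. dcomp. Qed.
Lemma d0_7 : dF (F0 MH) z 7 = - pph / (r^2 * (sin th)^2).
Proof. dcomp. Qed.
Lemma d1_1 : dF F1 z 1 = 0. Proof. dcomp. Qed.
Lemma d1_2 : dF F1 z 2 = 0. Proof. dcomp. Qed.
Lemma d1_4 : dF F1 z 4 = -1. Proof. dcomp. Qed.
Lemma d1_5 : dF F1 z 5 = 0. Proof. dcomp. Qed.
Lemma d1_6 : dF F1 z 6 = 0. Proof. dcomp. Qed.
Lemma d1_7 : dF F1 z 7 = 0. Proof. dcomp. Qed.
Lemma d2_1 : dF F2 z 1 = 0. Proof. dcomp. Qed.
Lemma d2_2 : dF F2 z 2 = 0. Proof. dcomp. Qed.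
Lemma d2_4 : dF F2 z 4 = 0. Proof. dcomp. Qed.
Lemma d2_5 : dF F2 z 5 = 0. Proof. dcomp. Qed.
Lemma d2_6 : dF F2 z 6 = 0. Proof. dcomp. Qed.
Lemma d2_7 : dF F2 z 7 = 1. Proof. dcomp. Qed.
Lemma d3_1 : dF F3 z 1 = 0. Proof. dcomp. Qed.
Lemma d3_2 : dF F3 z 2 = -2 * pph^2 * cos th / (sin th)^3. Proof. dcomp. Qed.
Lemma d3_4 : dF F3 z 4 = 0. Proof. dcomp. Qed.
Lemma d3_5 : dF F3 z 5 = 0. Proof. dcomp. Qed.
Lemma d3_6 : dF F3 z 6 = 2 * pth. Proof. dcomp. Qed.
Lemma d3_7 : dF F3 z 7 = 2 * pph / (sin th)^2. Proof. dcomp. Qed.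
End S.

Lemma dV MH m l r : 0 < r -> Derive (Veff MH m l) r =
  (2*MH/r^2)*(m^2 + l^2/r^2) + (1 - 2*MH/r)*(-2*l^2/r^3).
Proof. intros. apply is_derive_unique. unfold Veff. auto_derive.
 repeat split; repeat apply Rmult_integral_contrapositive_currified; lra. field; lra. Qed.

Theorem lemma2 (MH E m lz l : R) (z : PS) :
  0 < MH -> 0 < E -> 0 < m -> 0 <= l ->
  in_Gamma MH z ->
  F0 MH z = / 2 * m ^ 2 ->
  F1 z = E ->
  F2 z = lz ->
  F3 z = l ^ 2 ->
  ~ (Rabs lz = l) ->
  ~ (Veff MH m l (c_r z) = E ^ 2 /\ Derive (Veff MH m l) (c_r z) = 0) ->
  lin_indep4 (dF (F0 MH) z) (dF F1 z) (dF F2 z) (dF F3 z).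
Proof.
intros HM HE Hm Hl [[Hr Hth] [Hg Hpt]] H0 H1 H2 H3 Hab Hcirc c0 c1 c2 c3 H.
unfold c_r, c_th in Hr, Hth.
assert (Hs0 : 0 < sin (z 2%nat)) by (apply sin_gt_0; lra).
assert (Hs : sin (z 2%nat) <> 0) by lra.
assert (E1 := H 1%nat ltac:(lia)). rewrite d0_1, d1_1, d2_1, d3_1 in E1 by auto.
assert (E2 := H 2%nat ltac:(lia)). rewrite d0_2, d1_2, d2_2, d3_2 in E2 by auto.
assert (E4 := H 4%nat ltac:(lia)). rewrite d0_4, d1_4, d2_4, d3_4 in E4 by auto.
assert (E5 := H 5%nat ltac:(lia)). rewrite d0_5, d1_5, d2_5, d3_5 in E5 by auto.
assert (E6 := H 6%nat ltac:(lia)). rewrite d0_6, d1_6, d2_6, d3_6 in E6 by auto.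
assert (E7 := H 7%nat ltac:(lia)). rewrite d0_7, d1_7, d2_7, d3_7 in E7 by auto.
clear H.
rewrite dV in Hcirc by auto.
unfold F0, F1, F2, F3, Ham, gpp, c_r, c_th, c_pt, c_pr, c_pth, c_pph in *.
unfold Veff in Hcirc.
unfold g_tt, g_tr, g_rr in *.
set (r := z 1%nat) in *. set (th := z 2%nat) in *. set (pt := z 4%nat) in *.
set (pr := z 5%nat) in *. set (pth := z 6%nat) in *. set (pph := z 7%nat) in *.
set (s := sin th) in *. set (co := cos th) in *.
assert (hsc : s^2 + co^2 = 1) by (unfold s, co; pose proof (sin2_cos2 th); unfold Rsqr in *; nra).
clearbody r th pt pr pth pph s co.
assert (Hpt' : pt = - E) by lra. subst pt. subst lz.
destruct (Req_dec c0 0) as [Hc0 | Hc0].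
- subst c0.
  assert (Hc3 : c3 = 0).
  { destruct (Req_dec c3 0) as [h|h]; auto. exfalso.
    assert (hp : pth = 0).
    { assert (e : c3 * (2 * pth) = 0) by lra.
      apply Rmult_integral in e. destruct e as [e|e]; lra. }
    subst pth.
    assert (hq : pph ^ 2 * co = 0).
    { assert (e : c3 * (-2 * pph ^ 2 * co / s ^ 3) = 0) by lra.
      apply Rmult_integral in e. destruct e as [e|e]; [lra|].
      replace (pph ^ 2 * co) with ((-2 * pph ^ 2 * co / s ^ 3) * (- s^3 / 2)) by (field; auto).
      rewrite e. ring. }
    apply Rmult_integral in hq. destruct hq as [hq|hq].
    - assert (pph = 0) by nra. subst pph.
      apply Hab. rewrite Rabs_R0. assert (l^2 = 0) by (rewrite <- H3; field; auto). nra.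
    - assert (s^2 = 1). { nra. }
      apply Hab. assert (e : l^2 = pph^2) by (rewrite <- H3, H; field).
      rewrite <- (pow2_abs pph) in e. assert (0 <= Rabs pph) by apply Rabs_pos.
      assert (e2 : (l - Rabs pph) * (l + Rabs pph) = 0) by nra.
      apply Rmult_integral in e2. destruct e2; lra. }
  subst c3. repeat split; auto; lra.
- exfalso. apply Hcirc.
  assert (Ha : 2 * MH / r * - E + (1 - 2 * MH / r) * pr = 0).
  { assert (e : c0 * (- (2 * MH / r * - E + (1 - 2 * MH / r) * pr)) = 0) by lra.
    apply Rmult_integral in e. destruct e as [e|e]; lra. }
  assert (Hb : 2 * MH / r ^ 2 * (- E) ^ 2 - 4 * MH / r ^ 2 * - E * pr + 2 * MH / r ^ 2 * pr ^ 2 -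
        2 * (pth ^ 2 + pph ^ 2 / s ^ 2) / r ^ 3 = 0).
  { rewrite !Rmult_0_r, !Rplus_0_r in E1. apply Rmult_integral in E1. destruct E1 as [e|e]; [lra|].
    apply Rmult_integral in e. destruct e as [e|e]; [lra|]. exact e. }
  rewrite H3 in Hb, H0. clear E1 E2 E4 E5 E6 E7 Hg Hpt.
  set (u := 2 * MH / r) in *.
  assert (hM : MH = u * r / 2) by (unfold u; field; lra).
  rewrite hM in Hb |- *. clearbody u. clear hM.
  assert (hu : u <> 1) by (intro; subst u; nra).
  set (A := l ^ 2 / r ^ 2) in *.
  assert (hA : l ^ 2 / r ^ 3 = A / r) by (unfold A; field; lra).
  replace (2 * l ^ 2 / r ^ 3) with (2 * (A / r)) in * by (rewrite <- hA; field; lra).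
  replace (-2 * l ^ 2 / r ^ 3) with (-2 * (A / r)) by (rewrite <- hA; field; lra).
  clearbody A.
  assert (hm : m ^ 2 = (1 + u) * E ^ 2 + 2 * u * E * pr - (1 - u) * pr ^ 2 - A) by nra.
  assert (hw : (1 - u) * pr = u * E) by lra.
  assert (G1 : (1 - u) * (m ^ 2 + A) = E ^ 2).
  { replace ((1 - u) * (m ^ 2 + A)) with (E ^ 2 - (u * E - (1 - u) * pr) ^ 2) by (rewrite hm; ring).
    rewrite hw. ring. }
  split; [exact G1|].
  assert (hb : u * (E + pr) ^ 2 = 2 * A).
  { apply (Rmult_eq_reg_r (/ r)); [|apply Rinv_neq_0_compat; lra].
    transitivity (2 * A / r); [|field; lra].
    replace (u * (E + pr) ^ 2 * / r) with (2 * (u * r / 2) / r ^ 2 * (- E) ^ 2 - 4 * (u * r / 2) / r ^ 2 * - E * pr +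
    2 * (u * r / 2) / r ^ 2 * pr ^ 2) by (field; lra). lra. }
  assert (hE : (1 - u) * (E + pr) = E) by lra.
  assert (hk : (1 - u) * (E + pr) ^ 2 = m ^ 2 + A).
  { apply (Rmult_eq_reg_l (1 - u)); [|lra].
    rewrite G1. replace ((1-u)*((1-u)*(E+pr)^2)) with (((1-u)*(E+pr))^2) by ring.
    rewrite hE. reflexivity. }
  replace (2 * (u * r / 2) / r ^ 2 * (m ^ 2 + A) + (1 - u) * (-2 * (A / r))) with
    ((u * (m ^ 2 + A) - 2 * (1 - u) * A) / r) by (field; lra).
  rewrite <- hk.
  replace (u * ((1 - u) * (E + pr) ^ 2) - 2 * (1 - u) * A) with ((1 - u) * (u * (E + pr) ^ 2 - 2 * A)) by ring.
  rewrite hb. field. lra.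
Qed.
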